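(* Let $c_1,c_2\in\mathbb{R}$ with $|c_1|+|c_2|=1$, $c_1c_2\neq0$ and $|c_1|\neq|c_2|$. Let $c_{2k-1}=c_1$, $c_{2k}=c_2$ for $k\in\mathbb{N}$, and let $J$ be the self-adjoint operator in $l^2(\mathbb{N})$ given by the Jacobi matrix with diagonal entries $q_n=n$ and off-diagonal entries $\lambda_n=c_nn$, i.e. $(Ju)_1=u_1+c_1u_2$, $(Ju)_n=\lambda_{n-1}u_{n-1}+nu_n+\lambda_nu_{n+1}$ for $n\ge2$, on its natural domain $\{u\in l^2(\mathbb{N}):Ju\in l^2(\mathbb{N})\}$. Then $\sigma(J)\cap(-\infty,\frac12)\neq\emptyset$. *)

(* Defs.v *)
From Stdlib Require Import Reals Lra.
From Coquelicot Require Import Coquelicot.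
Open Scope R_scope.

(* Sequences are indexed from 0: index i corresponds to the paper's index i+1. *)

Definition cseq (c1 c2 : R) (i : nat) : R := if Nat.even i then c1 else c2.

Definition lam (c1 c2 : R) (i : nat) : R := cseq c1 c2 i * INR (S i).

Definition Jop (c1 c2 : R) (u : nat -> R) (i : nat) : R :=
  match i with
  | O => 1 * u O + lam c1 c2 O * u 1%nat
  | S m => lam c1 c2 m * u m + INR (S i) * u i + lam c1 c2 i * u (S i)
  end.

Definition l2 (u : nat -> R) : Prop := ex_series (fun n => (u n) ^ 2).

Definition l2norm2 (u : nat -> R) : R := Series (fun n => (u n) ^ 2).

Definition Jdom (c1 c2 : R) (u : nat -> R) : Prop := l2 u /\ l2 (Jop c1 c2 u).

Definition in_resolvent (c1 c2 z : R) : Prop :=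
  (forall f, l2 f -> exists u, Jdom c1 c2 u /\ forall n, Jop c1 c2 u n - z * u n = f n)
  /\ (forall u, Jdom c1 c2 u -> (forall n, Jop c1 c2 u n - z * u n = 0) -> forall n, u n = 0)
  /\ (exists C : R, forall u, Jdom c1 c2 u ->
        l2norm2 u <= C * l2norm2 (fun n => Jop c1 c2 u n - z * u n)).

Definition in_spectrum (c1 c2 z : R) : Prop := ~ in_resolvent c1 c2 z.

(* Main.v *)
Require Import Defs.
From Stdlib Require Import Reals.
From Coquelicot Require Import Coquelicot.
From Stdlib Require Import Lra Lia.
Open Scope R_scope.

Fixpoint sumR (f : nat -> R) (n : nat) : R :=
  match n with O => 0 | S m => sumR f m + f m end.

Lemma sumR_ext f g n : (forall i, (i < n)%nat -> f i = g i) -> sumR f n = sumR g n.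
Proof. induction n; simpl; intros H; auto. rewrite IHn; [rewrite H; auto|]; intros; apply H; lia. Qed.

Lemma sumR_plus f g n : sumR (fun i => f i + g i) n = sumR f n + sumR g n.
Proof. induction n; simpl; [ring|rewrite IHn; ring]. Qed.

Lemma sumR_minus f g n : sumR (fun i => f i - g i) n = sumR f n - sumR g n.
Proof. induction n; simpl; [ring|rewrite IHn; ring]. Qed.

Lemma sumR_scal c f n : sumR (fun i => c * f i) n = c * sumR f n.
Proof. induction n; simpl; [ring|rewrite IHn; ring]. Qed.

Lemma sumR_le f g n : (forall i, (i < n)%nat -> f i <= g i) -> sumR f n <= sumR g n.
Proof. induction n; simpl; intros H; [lra|]. assert (f n <= g n) by (apply H; lia).
 assert (sumR f n <= sumR g n) by (apply IHn; intros; apply H; lia). lra. Qed.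

Lemma sumR_nonneg f n : (forall i, (i < n)%nat -> 0 <= f i) -> 0 <= sumR f n.
Proof. intros H. replace 0 with (sumR (fun _ => 0) n). apply sumR_le; auto.
 induction n; simpl; auto. rewrite IHn; [ring|intros; apply H; lia]. Qed.

Lemma sumR_split f n m : sumR f (n + m) = sumR f n + sumR (fun k => f (n + k)%nat) m.
Proof. induction m; simpl. rewrite Nat.add_0_r; ring. rewrite Nat.add_succ_r; simpl; rewrite IHm; ring. Qed.

Lemma sumR_zero n : sumR (fun _ => 0) n = 0.
Proof. induction n; simpl; [|rewrite IHn]; ring. Qed.

Lemma sumR_tail f n m : (forall i, (n <= i)%nat -> f i = 0) -> (n <= m)%nat -> sumR f m = sumR f n.
Proof. intros H Hm. replace m with (n + (m - n))%nat by lia. rewrite sumR_split.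
 rewrite (sumR_ext (fun k => f (n + k)%nat) (fun _ => 0)). rewrite sumR_zero; ring.
 intros i _. apply H. lia. Qed.

Lemma sum_n_sumR a m : sum_n a m = sumR a (S m).
Proof. induction m. rewrite sum_O; simpl; now rewrite Rplus_0_l. rewrite sum_Sn, IHm. simpl. reflexivity. Qed.

Section J.
Variables c1 c2 : R.
Notation lm := (lam c1 c2).
Notation J := (Jop c1 c2).

Lemma Jsum u v N : sumR (fun i => J u i * v i) (S N) =
  sumR (fun i => INR (S i) * u i * v i) (S N) + sumR (fun i => lm i * v i * u (S i)) (S N)
  + sumR (fun i => lm i * u i * v (S i)) (S N) - lm N * u N * v (S N).
Proof. induction N.
 - simpl. change (INR 1) with 1. ring.
 - change (sumR (fun i => J u i * v i) (S (S N))) with (sumR (fun i => J u i * v i) (S N) + J u (S N) * v (S N)).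
   rewrite IHN. simpl Jop. simpl sumR. ring. Qed.

Definition supp (n : nat) (u : nat -> R) := forall i, (n <= i)%nat -> u i = 0.
Definition Bz z n u v := sumR (fun i => (J u i - z * u i) * v i) n.
Definition Fz z n u := Bz z n u u.

Lemma Bz_expand z N u v : Bz z (S N) u v =
  sumR (fun i => (INR (S i) - z) * u i * v i) (S N) + sumR (fun i => lm i * v i * u (S i)) (S N)
  + sumR (fun i => lm i * u i * v (S i)) (S N) - lm N * u N * v (S N).
Proof. unfold Bz. rewrite (sumR_ext _ (fun i => J u i * v i - z * (u i * v i))) by (intros; ring).
 rewrite sumR_minus, Jsum, sumR_scal.
 rewrite (sumR_ext (fun i => (INR (S i) - z) * u i * v i) (fun i => INR (S i) * u i * v i - z * (u i * v i))) by (intros; ring).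
 rewrite sumR_minus, sumR_scal. ring. Qed.

Lemma Bz_sym z n u v : supp n u -> supp n v -> Bz z n u v = Bz z n v u.
Proof. intros Hu Hv. destruct n as [|N]. reflexivity.
 rewrite !Bz_expand. rewrite (Hu (S N)), (Hv (S N)) by lia.
 rewrite (sumR_ext (fun i => (INR (S i) - z) * u i * v i) (fun i => (INR (S i) - z) * v i * u i)) by (intros; ring).
 ring. Qed.

Lemma Jop_lin u v t i : J (fun k => u k + t * v k) i = J u i + t * J v i.
Proof. destruct i; simpl; ring. Qed.

Lemma Bz_lin1 z n u v w t : Bz z n (fun k => u k + t * v k) w = Bz z n u w + t * Bz z n v w.
Proof. unfold Bz. rewrite <- sumR_scal, <- sumR_plus. apply sumR_ext; intros.
 rewrite Jop_lin. ring. Qed.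

Lemma Bz_lin2 z n u v w t : Bz z n u (fun k => v k + t * w k) = Bz z n u v + t * Bz z n u w.
Proof. unfold Bz. rewrite <- sumR_scal, <- sumR_plus. apply sumR_ext; intros. ring. Qed.

Lemma supp_lin n u v t : supp n u -> supp n v -> supp n (fun k => u k + t * v k).
Proof. intros Hu Hv i Hi. rewrite Hu, Hv by auto. ring. Qed.

Lemma Fz_quad z n u v t : supp n u -> supp n v ->
  Fz z n (fun k => u k + t * v k) = Fz z n u + 2 * t * Bz z n u v + t * t * Fz z n v.
Proof. intros Hu Hv. unfold Fz. rewrite Bz_lin1, !Bz_lin2. rewrite (Bz_sym z n v u) by auto. ring. Qed.

Lemma Fz_shift z z' n u : Fz z' n u = Fz z n u + (z - z') * sumR (fun i => u i * u i) n.
Proof. unfold Fz, Bz. rewrite <- sumR_scal, <- sumR_plus. apply sumR_ext; intros. ring. Qed.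

End J.

Lemma CS_real a b c : 0 <= c -> (forall t, 0 <= a + 2 * t * b + t * t * c) -> b * b <= a * c.
Proof. intros Hc H. destruct (Rle_lt_or_eq_dec 0 c Hc) as [Hc'|Hc'].
 - specialize (H (- b / c)). replace (a + 2 * (- b / c) * b + - b / c * (- b / c) * c) with ((a * c - b * b) / c) in H by (field; lra).
   apply Rmult_le_compat_r with (r := c) in H; [|lra]. unfold Rdiv in H. rewrite Rmult_assoc, Rinv_l, Rmult_1_r in H; lra.
 - subst c. destruct (Req_dec b 0). subst; lra.
   specialize (H (- (a + 1) / (2 * b))). replace (a + 2 * (- (a + 1) / (2 * b)) * b + - (a + 1) / (2 * b) * (- (a + 1) / (2 * b)) * 0) with (-1) in H by (field; auto). lra.
Qed.

Lemma key_ineq c x y : 0 <= Rabs c * (x * x + y * y) + 2 * c * x * y.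
Proof. destruct (Rle_dec 0 c). rewrite Rabs_right by lra.
 pose proof (Rmult_le_pos c ((x+y)*(x+y)) r (Rle_0_sqr (x+y))). nra.
 rewrite Rabs_left by lra. pose proof (Rmult_le_pos (-c) ((x-y)*(x-y)) ltac:(lra) (Rle_0_sqr (x-y))). nra. Qed.

Lemma cseq_S c1 c2 i : Rabs c1 + Rabs c2 = 1 -> Rabs (cseq c1 c2 (S i)) = 1 - Rabs (cseq c1 c2 i).
Proof. intros H. unfold cseq. rewrite Nat.even_succ, <- Nat.negb_even. destruct (Nat.even i); simpl; lra. Qed.

Lemma cseq_abs_le c1 c2 i : Rabs c1 + Rabs c2 = 1 -> Rabs (cseq c1 c2 i) <= 1.
Proof. intros H. unfold cseq. pose proof (Rabs_pos c1); pose proof (Rabs_pos c2). destruct (Nat.even i); lra. Qed.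

Lemma form_lb c1 c2 (hs : Rabs c1 + Rabs c2 = 1) u N :
  sumR (fun i => (INR (S i) - 0) * u i * u i + lam c1 c2 i * u i * u (S i) + lam c1 c2 i * u i * u (S i)) (S N)
  >= - (Rabs (cseq c1 c2 N) * INR (S N) * (u (S N) * u (S N))).
Proof. induction N.
 - simpl. unfold lam. change (INR 1) with 1. pose proof (key_ineq (cseq c1 c2 0) (u 0%nat) (u 1%nat)).
   pose proof (cseq_abs_le c1 c2 0 hs). assert (0 <= (1 - Rabs (cseq c1 c2 0)) * (u 0%nat * u 0%nat)).
   { apply Rmult_le_pos; nra. } nra.
 - change (sumR ?f (S (S N))) with (sumR f (S N) + f (S N)). cbv beta.
   pose proof (cseq_S c1 c2 N hs) as HS. replace (Rabs (cseq c1 c2 N)) with (1 - Rabs (cseq c1 c2 (S N))) in IHN by lra. unfold lam in *.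
   set (c := cseq c1 c2 (S N)) in *. set (x := u (S N)) in *. set (y := u (S (S N))).
   pose proof (key_ineq c x y). pose proof (Rabs_pos c). pose proof (cseq_abs_le c1 c2 (S N) hs). fold c in H1.
   assert (HN : 0 <= INR (S N)) by apply pos_INR. rewrite (S_INR (S N)). set (n1 := INR (S N)) in *.
   assert (0 <= (1 - Rabs c) * (x * x)) by (apply Rmult_le_pos; nra).
   assert (0 <= (n1 + 1) * (Rabs c * (x * x + y * y) + 2 * c * x * y)) by (apply Rmult_le_pos; lra).
   nra.
Qed.

Lemma Fz0_nonneg c1 c2 (hs : Rabs c1 + Rabs c2 = 1) n u : supp n u -> 0 <= Fz c1 c2 0 n u.
Proof. intros Hu. destruct n as [|N]. unfold Fz, Bz; simpl; lra.
 unfold Fz. rewrite Bz_expand. rewrite (Hu (S N)) by lia.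
 pose proof (form_lb c1 c2 hs u N). rewrite (Hu (S N)) in H by lia.
 rewrite !sumR_plus in H. lra.
Qed.

Lemma fin_is_series n u : supp n u -> is_series (fun k => u k ^ 2) (sumR (fun k => u k ^ 2) n).
Proof. intros Hu. cut (is_lim_seq (sum_n (fun k => u k ^ 2)) (sumR (fun k => u k ^ 2) n)). intro H; exact H.
 apply (is_lim_seq_ext_loc (fun _ => sumR (fun k => u k ^ 2) n)).
 exists n. intros m Hm. rewrite sum_n_sumR. symmetry. apply sumR_tail; [|lia].
 intros i Hi. rewrite Hu by auto. ring. apply is_lim_seq_const. Qed.

Lemma fin_l2 n u : supp n u -> l2 u.
Proof. intros H. eexists. apply (fin_is_series n u H). Qed.

Lemma fin_l2norm2 n u : supp n u -> l2norm2 u = sumR (fun k => u k ^ 2) n.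
Proof. intros H. apply is_series_unique. apply fin_is_series; auto. Qed.

Lemma sumR_mono a n m : (forall k, 0 <= a k) -> (n <= m)%nat -> sumR a n <= sumR a m.
Proof. intros Ha H. replace m with (n + (m - n))%nat by lia. rewrite sumR_split.
 assert (0 <= sumR (fun k => a (n + k)%nat) (m - n)) by (apply sumR_nonneg; auto). lra. Qed.

Lemma partial_le_Series a n : (forall k, 0 <= a k) -> ex_series a -> sumR a n <= Series a.
Proof. intros Ha He. pose proof (Series_correct a He) as Hs.
 assert (Hl : is_lim_seq (sum_n a) (Series a)) by exact Hs.
 apply (is_lim_seq_incr_n _ n) in Hl.
 assert (Rbar_le (sumR a n) (Series a)).
 { apply (is_lim_seq_le (fun _ => sumR a n) (fun k => sum_n a (k + n)%nat)); auto.
   intros k. rewrite sum_n_sumR. apply sumR_mono; auto; lia. apply is_lim_seq_const. }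
 simpl in H. auto. Qed.

Lemma sumR_shift1 a L : sumR (fun k => a (S k)) L = sumR a (S L) - a O.
Proof. induction L; simpl in *. ring. rewrite IHL. ring. Qed.

Lemma sumR_pair_le a L : (forall k, 0 <= a k) -> sumR (fun k => a k + a (S k)) L <= 2 * sumR a (S L).
Proof. intros Ha. rewrite sumR_plus, sumR_shift1. pose proof (sumR_mono a L (S L) Ha ltac:(lia)). pose proof (Ha O). lra. Qed.

Lemma sumR_gt g c L : (0 < L)%nat -> (forall k, (k < L)%nat -> c < g k) -> INR L * c < sumR g L.
Proof. intros HL H. induction L. lia. destruct L. simpl. specialize (H O ltac:(lia)). lra.
 change (sumR g (S (S L))) with (sumR g (S L) + g (S L)). rewrite S_INR.
 assert (INR (S L) * c < sumR g (S L)) by (apply IHL; [lia| intros; apply H; lia]).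
 specialize (H (S L) ltac:(lia)). lra. Qed.

Lemma tail_small x : l2 x -> forall eps, 0 < eps -> forall n0, exists N, (n0 <= N)%nat /\ INR (S N) * Rabs (x N * x (S N)) < eps.
Proof. intros Hx eps He n0. set (a := fun k => x k ^ 2).
 assert (Ha : forall k, 0 <= a k) by (intros; unfold a; nra).
 pose proof (Series_correct a Hx) as Hs. assert (Hl : is_lim_seq (sum_n a) (Series a)) by exact Hs.
 apply is_lim_seq_spec in Hl. destruct (Hl (mkposreal (eps / 4) ltac:(lra))) as [M0 HM0]. simpl in HM0.
 set (M := S (Nat.max M0 n0)).
 destruct (Classical_Prop.classic (exists N, (M <= N <= 2 * M)%nat /\ INR (S N) * Rabs (x N * x (S N)) < eps)) as [[N [HN1 HN2]]|Hno].
 { exists N. split; auto. unfold M in HN1. lia. }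
 exfalso.
 assert (Hlow : INR (S M) * (eps / INR (S M)) < sumR (fun k => a (M + k)%nat + a (S (M + k))) (S M)).
 { apply sumR_gt. lia. intros k Hk. 
   assert (Hk2 : ~ (INR (S (M + k)) * Rabs (x (M + k)%nat * x (S (M + k))) < eps)).
   { intros C. apply Hno. exists (M + k)%nat. split; auto. lia. }
   assert (HI : INR (S (M + k)) < 2 * INR (S M)). { assert (INR k <= INR M) by (apply le_INR; lia). rewrite !S_INR, plus_INR. pose proof (pos_INR M). lra. }
   assert (HSM : 0 < INR (S M)) by (apply lt_0_INR; lia).
   assert (HSMk : 0 < INR (S (M + k))) by (apply lt_0_INR; lia).
   assert (eps <= INR (S (M + k)) * Rabs (x (M + k)%nat * x (S (M + k)))) by lra.
   assert (H2 : 2 * Rabs (x (M + k)%nat * x (S (M + k))) <= a (M + k)%nat + a (S (M + k))).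
   { unfold a. rewrite Rabs_mult. set (p := x (M + k)%nat). set (q := x (S (M + k))).
     destruct (Rle_dec 0 p); destruct (Rle_dec 0 q);
       [rewrite (Rabs_right p), (Rabs_right q) by lra|rewrite (Rabs_right p), (Rabs_left q) by lra|rewrite (Rabs_left p), (Rabs_right q) by lra|rewrite (Rabs_left p), (Rabs_left q) by lra]; pose proof (Rle_0_sqr (p - q)); pose proof (Rle_0_sqr (p + q)); unfold Rsqr in *; simpl; lra. }
   apply Rmult_lt_reg_l with (r := INR (S M)); auto.
   replace (INR (S M) * (eps / INR (S M))) with eps by (field; lra).
   assert (HR : 0 < Rabs (x (M + k)%nat * x (S (M + k)))).
   { destruct (Rle_lt_or_eq_dec 0 _ (Rabs_pos (x (M + k)%nat * x (S (M + k))))) as [h|h]; auto. rewrite <- h in *. lra. }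
   assert (Rabs (x (M + k)%nat * x (S (M + k))) * INR (S (M + k)) < Rabs (x (M + k)%nat * x (S (M + k))) * (2 * INR (S M))).
   { apply Rmult_lt_compat_l; auto. }
   nra. }
 replace (INR (S M) * (eps / INR (S M))) with eps in Hlow by (field; apply not_0_INR; lia).
 pose proof (sumR_pair_le (fun k => a (M + k)%nat) (S M) (fun k => Ha _)) as Hp.
 rewrite (sumR_ext (fun k => a (M + k)%nat + a (S (M + k))) (fun k => a (M + k)%nat + a (M + S k)%nat)) in Hlow by (intros; f_equal; f_equal; lia).
 assert (Hsplit := sumR_split a M (S (S M))).
 assert (E1 := HM0 (Nat.pred M) ltac:(unfold M; simpl; lia)).
 assert (E2 := HM0 (Nat.pred M + S (S M))%nat ltac:(unfold M; simpl; lia)).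
 rewrite !sum_n_sumR in E1, E2.
 replace (S (Nat.pred M)) with M in E1 by (unfold M; simpl; lia).
 replace (S (Nat.pred M + S (S M))) with (M + S (S M))%nat in E2 by (unfold M; simpl; lia).
 apply Rabs_def2 in E1. apply Rabs_def2 in E2. lra.
Qed.

Section Spec.
Variables c1 c2 : R.
Hypothesis hs : Rabs c1 + Rabs c2 = 1.

Definition Pz z := forall n u, supp n u -> 0 <= Fz c1 c2 z n u.

Definition trunc (x : nat -> R) (N : nat) := fun i => if (i <? S N)%nat then x i else 0.

Lemma trunc_le x N i : (i <= N)%nat -> trunc x N i = x i.
Proof. intros H. unfold trunc. destruct (Nat.ltb_spec i (S N)); auto; lia. Qed.
Lemma trunc_gt x N i : (N < i)%nat -> trunc x N i = 0.
Proof. intros H. unfold trunc. destruct (Nat.ltb_spec i (S N)); auto; lia. Qed.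
Lemma trunc_supp x N : supp (S N) (trunc x N).
Proof. intros i Hi. apply trunc_gt. lia. Qed.

Lemma J_trunc_lt x N i : (i < N)%nat -> Jop c1 c2 (trunc x N) i = Jop c1 c2 x i.
Proof. intros H. destruct i; simpl; rewrite !trunc_le by lia; reflexivity. Qed.
Lemma J_trunc_N x N : Jop c1 c2 (trunc x N) N = Jop c1 c2 x N - lam c1 c2 N * x (S N).
Proof. destruct N; simpl; rewrite ?trunc_le by lia; rewrite trunc_gt by lia; ring. Qed.

Lemma lam_bound i : Rabs (lam c1 c2 i) <= INR (S i).
Proof. unfold lam. rewrite Rabs_mult, (Rabs_right (INR (S i))) by (apply Rle_ge, pos_INR).
 pose proof (cseq_abs_le c1 c2 i hs). pose proof (pos_INR (S i)). nra. Qed.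

Lemma res_pos z : Pz z -> in_resolvent c1 c2 z -> exists eta, 0 < eta /\ Pz (z + eta).
Proof. intros HP [H1 [H2 [C H3]]]. set (D := Rabs C + 1).
 assert (HD : 1 <= D) by (unfold D; pose proof (Rabs_pos C); lra).
 exists (2 / (1 + D)). split. apply Rdiv_lt_0_compat; lra.
 intros n u Hu. rewrite (Fz_shift c1 c2 z). set (U := sumR (fun i => u i * u i) n).
 assert (HU : 0 <= U) by (apply sumR_nonneg; intros; nra).
 set (F := Fz c1 c2 z n u). assert (HF : 0 <= F) by (apply HP; auto).
 destruct (H1 u (fin_l2 n u Hu)) as [x [[Hxl2 HJl2] Hx]].
 assert (HX : l2norm2 x <= D * U).
 { specialize (H3 x (conj Hxl2 HJl2)).
   assert (E : l2norm2 (fun n0 => Jop c1 c2 x n0 - z * x n0) = l2norm2 u).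
   { unfold l2norm2. apply Series_ext. intros; rewrite Hx; auto. }
   rewrite E, (fin_l2norm2 n u Hu) in H3.
   replace (sumR (fun k => u k ^ 2) n) with U in H3 by (apply sumR_ext; intros; ring).
   assert (C * U <= D * U) by (apply Rmult_le_compat_r; auto; unfold D; pose proof (Rle_abs C); lra). lra. }
 assert (Hclaim : forall eps, 0 < eps -> U * U <= F * ((1 + D) / 2 * U + eps)).
 { intros eps He. destruct (tail_small x Hxl2 eps He n) as [N [HN HNe]].
   set (xN := trunc x N).
   assert (HuS : supp (S N) u) by (intros i Hi; apply Hu; lia).
   assert (HFu : Fz c1 c2 z (S N) u = F).
   { unfold F, Fz, Bz. apply sumR_tail; [|lia]. intros i Hi. rewrite (Hu i Hi). ring. }
   assert (HB : Bz c1 c2 z (S N) u xN = U).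
   { rewrite Bz_sym by (auto; apply trunc_supp). unfold Bz, U.
     rewrite <- (sumR_tail (fun i => u i * u i) n (S N)) by (auto; intros; rewrite Hu by auto; ring).
     apply sumR_ext. intros i Hi. destruct (Nat.lt_ge_cases i n).
     - unfold xN. rewrite J_trunc_lt, trunc_le by lia. rewrite Hx. ring.
     - rewrite Hu by auto. ring. }
   assert (HFx : Fz c1 c2 z (S N) xN <= (1 + D) / 2 * U + eps).
   { unfold Fz, Bz. simpl sumR.
     rewrite (sumR_ext _ (fun i => (Jop c1 c2 x i - z * x i) * x i)).
     2:{ intros i Hi. unfold xN. rewrite J_trunc_lt, trunc_le by lia. ring. }
     unfold xN. rewrite J_trunc_N, trunc_le by lia.
     assert (E : sumR (fun i => (Jop c1 c2 x i - z * x i) * x i) N + (Jop c1 c2 x N - z * x N) * x N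
                 = sumR (fun i => u i * x i) (S N)).
     { simpl. f_equal. apply sumR_ext; intros; rewrite Hx; auto. rewrite Hx; auto. }
     assert (HS1 : sumR (fun i => u i * x i) (S N) <= (sumR (fun i => u i * u i) (S N) + sumR (fun i => x i ^ 2) (S N)) / 2).
     { replace ((sumR (fun i => u i * u i) (S N) + sumR (fun i => x i ^ 2) (S N)) / 2) with
         (sumR (fun i => (u i * u i + x i ^ 2) / 2) (S N)).
       apply sumR_le; intros. pose proof (Rle_0_sqr (u i - x i)). unfold Rsqr in *. simpl. lra.
       rewrite (sumR_ext _ (fun i => /2 * (u i * u i + x i ^ 2))) by (intros; field).
       rewrite sumR_scal, sumR_plus. field. }
     rewrite (sumR_tail (fun i => u i * u i) n (S N)) in HS1 by (auto; intros; rewrite Hu by auto; ring).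
     fold U in HS1.
     assert (HS2 : sumR (fun i => x i ^ 2) (S N) <= l2norm2 x) by (apply partial_le_Series; auto; intros; nra).
     assert (HS3 : - (lam c1 c2 N * x (S N) * x N) <= eps).
     { pose proof (lam_bound N). assert (Rabs (lam c1 c2 N * x (S N) * x N) < eps).
       { assert (E2 : Rabs (lam c1 c2 N * x (S N) * x N) = Rabs (lam c1 c2 N) * Rabs (x N * x (S N))) by (rewrite <- Rabs_mult; f_equal; ring).
         rewrite E2. pose proof (Rabs_pos (x N * x (S N))).
         assert (Rabs (lam c1 c2 N) * Rabs (x N * x (S N)) <= INR (S N) * Rabs (x N * x (S N))) by (apply Rmult_le_compat_r; auto). lra. }
       pose proof (Rabs_maj2 (lam c1 c2 N * x (S N) * x N)). lra. }
     assert (D * U + U <= (1 + D) * U) by lra.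
     lra. }
   assert (Hq : forall t, 0 <= F + 2 * t * U + t * t * Fz c1 c2 z (S N) xN).
   { intros t. rewrite <- HFu, <- HB. rewrite <- Fz_quad by (auto; apply trunc_supp). apply HP.
     apply supp_lin; auto. apply trunc_supp. }
   assert (HFx0 : 0 <= Fz c1 c2 z (S N) xN) by (apply HP; apply trunc_supp).
   pose proof (CS_real F U _ HFx0 Hq).
   assert (F * Fz c1 c2 z (S N) xN <= F * ((1 + D) / 2 * U + eps)) by (apply Rmult_le_compat_l; auto). lra. }
 fold F. assert (HF2 : 2 / (1 + D) * U <= F).
 { destruct (Rle_lt_or_eq_dec 0 U HU) as [HUp|HU0]; [|rewrite <- HU0; lra].
   destruct (Rle_lt_dec (2 / (1 + D) * U) F) as [h|h]; auto. exfalso.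
   assert (HA : F * ((1 + D) / 2) < U).
   { apply Rmult_lt_compat_r with (r := (1 + D) / 2) in h; [|lra].
     replace (2 / (1 + D) * U * ((1 + D) / 2)) with U in h by (field; lra). lra. }
   set (eps := (U * U - F * ((1 + D) / 2 * U)) / (2 * (F + 1))).
   assert (Hpos : 0 < U * U - F * ((1 + D) / 2 * U)).
   { replace (U * U - F * ((1 + D) / 2 * U)) with (U * (U - F * ((1 + D) / 2))) by ring. apply Rmult_lt_0_compat; lra. }
   assert (He : 0 < eps) by (unfold eps; apply Rdiv_lt_0_compat; lra).
   specialize (Hclaim eps He).
   assert (F * eps < U * U - F * ((1 + D) / 2 * U)).
   { unfold eps. replace (F * ((U * U - F * ((1 + D) / 2 * U)) / (2 * (F + 1)))) with
       ((U * U - F * ((1 + D) / 2 * U)) * (F / (2 * (F + 1)))) by (field; lra).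
     assert (F / (2 * (F + 1)) < 1). { apply Rmult_lt_reg_r with (r := 2 * (F + 1)); [lra|]. field_simplify; lra. }
     nra. }
   nra. }
 lra.
Qed.

Lemma spectral_main : (exists n v, supp n v /\ Fz c1 c2 (1/2) n v < 0) -> exists z, z < 1/2 /\ in_spectrum c1 c2 z.
Proof. intros [n [v [Hv Hneg]]].
 assert (Hb : bound Pz).
 { exists (1/2). intros z Hz. destruct (Rle_dec z (1/2)); auto. exfalso.
   specialize (Hz n v Hv). rewrite (Fz_shift c1 c2 (1/2)) in Hz.
   assert (0 <= sumR (fun i => v i * v i) n) by (apply sumR_nonneg; intros; nra). nra. }
 assert (Hne : exists z, Pz z) by (exists 0; intros n0 u0 Hu0; apply Fz0_nonneg; auto).
 destruct (completeness Pz Hb Hne) as [m [Hub Hlub]].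
 assert (HPm : Pz m).
 { intros n' u Hu. destruct (Rle_dec 0 (Fz c1 c2 m n' u)) as [h|h]; auto. exfalso.
   set (U := sumR (fun i => u i * u i) n'). assert (HU : 0 <= U) by (apply sumR_nonneg; intros; nra).
   set (eps := - Fz c1 c2 m n' u / (2 * (U + 1))).
   assert (He : 0 < eps) by (unfold eps; apply Rdiv_lt_0_compat; lra).
   assert (Hex : exists z, Pz z /\ m - eps < z).
   { apply Classical_Prop.NNPP. intros Hn. assert (m <= m - eps); [|lra].
     apply Hlub. intros z Hz. destruct (Rle_dec z (m - eps)); auto. exfalso. apply Hn. exists z. split; auto; lra. }
   destruct Hex as [z [Hz Hzm]]. assert (z <= m) by (apply Hub; auto).
   specialize (Hz n' u Hu). rewrite (Fz_shift c1 c2 m) in Hz. fold U in Hz.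
   assert ((m - z) * U <= eps * U) by (apply Rmult_le_compat_r; lra).
   assert (eps * U < - Fz c1 c2 m n' u).
   { unfold eps. replace (- Fz c1 c2 m n' u / (2 * (U + 1)) * U) with (- Fz c1 c2 m n' u * (U / (2 * (U + 1)))) by (field; lra).
     assert (U / (2 * (U + 1)) < 1). { apply Rmult_lt_reg_r with (r := 2 * (U + 1)); [lra|]. field_simplify; lra. }
     assert (0 <= U / (2 * (U + 1))) by (apply Rmult_le_pos; [lra| left; apply Rinv_0_lt_compat; lra]). nra. }
   lra. }
 assert (Hm : m <= 1/2) by (apply Hlub; destruct Hb as [b Hb']; intros z Hz; 
   destruct (Rle_dec z (1/2)); auto; exfalso; specialize (Hz n v Hv); rewrite (Fz_shift c1 c2 (1/2)) in Hz;
   assert (0 <= sumR (fun i => v i * v i) n) by (apply sumR_nonneg; intros; nra); nra).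
 exists m. split.
 - destruct (Rle_lt_or_eq_dec m (1/2) Hm) as [h|h]; auto. exfalso. subst m. specialize (HPm n v Hv). lra.
 - intros Hres. destruct (res_pos m HPm Hres) as [eta [Heta HP2]].
   assert (m + eta <= m) by (apply Hub; auto). lra.
Qed.
End Spec.

Lemma pair_sum g K : sumR g (2 * K) = sumR (fun k => g (2 * k)%nat + g (S (2 * k))) K.
Proof. induction K. reflexivity. replace (2 * S K)%nat with (S (S (2 * K))) by lia.
 change (sumR g (2 * K) + g (2 * K)%nat + g (S (2 * K)) = sumR (fun k => g (2 * k)%nat + g (S (2 * k))) K + (g (2 * K)%nat + g (S (2 * K)))). rewrite IHK. ring. Qed.

Lemma even2 k : Nat.even (2 * k) = true. Proof. apply Nat.even_even. Qed.
Lemma even2S k : Nat.even (S (2 * k)) = false. Proof. replace (S (2*k)) with (2*k+1)%nat by lia. apply Nat.even_odd. Qed.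

Section TV.
Variables c1 c2 : R.
Definition sg (c : R) := if Rlt_dec c 0 then -1 else 1.
Fixpoint sig (i : nat) : R := match i with O => 1 | S j => - sg (cseq c1 c2 j) * sig j end.

Lemma sg_abs c : c * sg c = Rabs c.
Proof. unfold sg. destruct (Rlt_dec c 0). rewrite Rabs_left by auto; ring. rewrite Rabs_right by lra; ring. Qed.
Lemma sg_sq c : sg c * sg c = 1.
Proof. unfold sg. destruct (Rlt_dec c 0); ring. Qed.
Lemma sig_sq i : sig i * sig i = 1.
Proof. induction i; simpl. ring. replace (- sg (cseq c1 c2 i) * sig i * (- sg (cseq c1 c2 i) * sig i)) with
  ((sg (cseq c1 c2 i) * sg (cseq c1 c2 i)) * (sig i * sig i)) by ring. rewrite sg_sq, IHi; ring. Qed.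
Lemma lam_sig i : lam c1 c2 i * sig i * sig (S i) = - (Rabs (cseq c1 c2 i) * INR (S i)).
Proof. simpl sig. unfold lam. rewrite <- sg_abs.
 replace (cseq c1 c2 i * INR (S i) * sig i * (- sg (cseq c1 c2 i) * sig i)) with
   (- (cseq c1 c2 i * sg (cseq c1 c2 i) * INR (S i) * (sig i * sig i))) by ring. rewrite sig_sq. ring. Qed.

Lemma Fz_sig z N w : w (S N) = 0 ->
  Fz c1 c2 z (S N) (fun i => sig i * w i) =
  sumR (fun i => (INR (S i) - z) * w i * w i - 2 * (Rabs (cseq c1 c2 i) * INR (S i)) * w i * w (S i)) (S N).
Proof. intros H0. unfold Fz. rewrite Bz_expand. rewrite H0, Rmult_0_r, Rmult_0_r, Rminus_0_r.
 rewrite <- !sumR_plus. apply sumR_ext. intros i _.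
 replace ((INR (S i) - z) * (sig i * w i) * (sig i * w i)) with ((INR (S i) - z) * w i * w i * (sig i * sig i)) by ring.
 replace (lam c1 c2 i * (sig i * w i) * (sig (S i) * w (S i))) with (lam c1 c2 i * sig i * sig (S i) * w i * w (S i)) by ring.
 rewrite sig_sq, lam_sig. ring. Qed.

Definition xk r K k := if (k <? K)%nat then r ^ k else 0.
Definition mk k := 2 * INR k + 3/2.
Definition Nk r K k := Rabs c1 * (2 * INR k + 1) * xk r K k + Rabs c2 * (2 * INR k + 2) * xk r K (S k).
Definition yk r K k := if (k <? K)%nat then Nk r K k / mk k else 0.
Definition wv r K i := if Nat.even i then xk r K (Nat.div2 i) else yk r K (Nat.div2 i).
Definition tv r K i := sig i * wv r K i.

Lemma mk_pos k : 0 < mk k. Proof. unfold mk. pose proof (pos_INR k). lra. Qed.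

Lemma wv_zero r K i : (2 * K <= i)%nat -> wv r K i = 0.
Proof. intros H. assert (K <= Nat.div2 i)%nat by (apply Nat.div2_le_lower_bound; lia).
 unfold wv, xk, yk. destruct (Nat.even i); destruct (Nat.ltb_spec (Nat.div2 i) K); auto; lia. Qed.

Lemma tv_supp r K : supp (2 * K) (tv r K).
Proof. intros i Hi. unfold tv. rewrite wv_zero by auto. ring. Qed.

Lemma INR_2k1 k : INR (S (2 * k)) = 2 * INR k + 1.
Proof. rewrite S_INR, mult_INR. simpl. ring. Qed.
Lemma INR_2k2 k : INR (S (S (2 * k))) = 2 * INR k + 2.
Proof. rewrite !S_INR, mult_INR. simpl. ring. Qed.

Lemma cseq_even k : cseq c1 c2 (2 * k) = c1. Proof. unfold cseq. rewrite even2. auto. Qed.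
Lemma cseq_odd k : cseq c1 c2 (S (2 * k)) = c2. Proof. unfold cseq. rewrite even2S. auto. Qed.

Lemma Fz_tv r K : (1 <= K)%nat -> Fz c1 c2 (1/2) (2 * K) (tv r K) =
  sumR (fun k => (2 * INR k + 1/2) * (xk r K k * xk r K k) - Nk r K k * Nk r K k / mk k) K.
Proof. intros HK. destruct K as [|K']. lia.
 replace (2 * S K')%nat with (S (S (2 * K'))) by lia. unfold tv. rewrite Fz_sig by (apply wv_zero; lia).
 replace (S (S (2 * K'))) with (2 * S K')%nat by lia. rewrite pair_sum. apply sumR_ext. intros k Hk.
 rewrite cseq_even, cseq_odd, INR_2k1, INR_2k2. unfold wv. rewrite even2, even2S.
 replace (S (S (2 * k))) with (2 * S k)%nat by lia. rewrite even2, !Nat.div2_double, Nat.div2_succ_double.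
 unfold yk. destruct (Nat.ltb_spec k (S K')); [|lia]. unfold Nk. pose proof (mk_pos k). unfold mk in *. field. lra. Qed.
End TV.

Section Bound.
Variables c1 c2 : R.
Hypothesis hs : Rabs c1 + Rabs c2 = 1.
Variable r : R.
Hypothesis hr : 0 < r < 1.
Let A := Rabs c1.
Let B := Rabs c2.
Let dl := (A - B) / 2.
Let s := 1 - r.
Let q := r * r.

Lemma core_ineq (kk : R) : 0 <= kk ->
  (2 * kk + 1/2) - (A * (2 * kk + 1) + B * (2 * kk + 2) * r) * (A * (2 * kk + 1) + B * (2 * kk + 2) * r) / (2 * kk + 3/2)
  <= -2 * B + 4 * B * (kk + 1) * s + 2 * s - dl * dl / (2 * kk + 3/2).
Proof. intros Hk. assert (HB : 0 <= B <= 1) by (unfold B; pose proof (Rabs_pos c1); pose proof (Rabs_pos c2); lra).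
 assert (HA : A = 1 - B) by (unfold A, B in *; lra). assert (Hr : r = 1 - s) by (unfold s; ring).
 set (m := 2 * kk + 3/2). assert (Hm : 0 < m) by (unfold m; lra).
 set (e := 2 * B * (kk + 1) * s).
 assert (Hs : 0 < s < 1) by (unfold s; lra).
 assert (He : 0 <= e <= 2 * (kk + 1) * s).
 { assert (0 <= B * (2 * (kk + 1) * s)) by (apply Rmult_le_pos; [lra|]; apply Rmult_le_pos; lra).
   assert (0 <= (1 - B) * (2 * (kk + 1) * s)) by (apply Rmult_le_pos; [lra|]; apply Rmult_le_pos; lra).
   unfold e; split; lra. }
 assert (Hd : -1/2 <= dl <= 1/2) by (unfold dl; rewrite HA; lra).
 assert (Hkey : (2 * kk + 1/2) * m - (A * (2 * kk + 1) + B * (2 * kk + 2) * r) * (A * (2 * kk + 1) + B * (2 * kk + 2) * r)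
     = m * (-2 * B + 4 * B * (kk + 1) * s + 2 * s) - dl * dl - (2 * m * s + 2 * dl * e + e * e)).
 { unfold e, m, dl. rewrite HA, Hr. field. }
 assert (Hpos : 0 <= 2 * m * s + 2 * dl * e + e * e).
 { assert (2 * m * s - e >= 0) by (unfold m; nra). assert (2 * dl * e >= - e) by nra. nra. }
 apply Rmult_le_reg_r with (r := m); auto.
 replace (((2 * kk + 1/2) - (A * (2 * kk + 1) + B * (2 * kk + 2) * r) * (A * (2 * kk + 1) + B * (2 * kk + 2) * r) / m) * m)
   with ((2 * kk + 1/2) * m - (A * (2 * kk + 1) + B * (2 * kk + 2) * r) * (A * (2 * kk + 1) + B * (2 * kk + 2) * r)) by (field; lra).
 replace ((-2 * B + 4 * B * (kk + 1) * s + 2 * s - dl * dl / m) * m) with (m * (-2 * B + 4 * B * (kk + 1) * s + 2 * s) - dl * dl) by (field; lra).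
 lra.
Qed.

Lemma q_pow k : q ^ k = r ^ k * r ^ k.
Proof. unfold q. apply Rpow_mult_distr. Qed.

Lemma Tk_bound K k : (k < K)%nat ->
  (2 * INR k + 1/2) * (xk r K k * xk r K k) - Nk c1 c2 r K k * Nk c1 c2 r K k / mk k
  <= q ^ k * (-2 * B + 4 * B * (INR k + 1) * s + 2 * s - dl * dl / mk k)
     + (if (S k =? K)%nat then q ^ k * (2 * INR k + 3) else 0).
Proof. intros Hk. assert (Hx : xk r K k = r ^ k) by (unfold xk; destruct (Nat.ltb_spec k K); auto; lia).
 pose proof (mk_pos k) as Hm. pose proof (pos_INR k) as Hk0.
 assert (HB : 0 <= B <= 1) by (unfold B; pose proof (Rabs_pos c1); pose proof (Rabs_pos c2); lra).
 assert (HA : A = 1 - B) by (unfold A, B in *; lra).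
 assert (Hs : 0 < s < 1) by (unfold s; lra).
 assert (Hd : -1/2 <= dl <= 1/2) by (unfold dl; rewrite HA; lra).
 assert (Hrk : 0 <= r ^ k * r ^ k) by (apply Rle_0_sqr).
 rewrite q_pow. unfold Nk. rewrite Hx. fold A B.
 destruct (Nat.eqb_spec (S k) K) as [HK|HK].
 - assert (Hx' : xk r K (S k) = 0) by (unfold xk; destruct (Nat.ltb_spec (S k) K); auto; lia). rewrite Hx'.
   assert (0 <= (A * (2 * INR k + 1) * r ^ k + B * (2 * INR k + 2) * 0) * (A * (2 * INR k + 1) * r ^ k + B * (2 * INR k + 2) * 0) / mk k).
   { apply Rmult_le_pos; [apply Rle_0_sqr| left; apply Rinv_0_lt_compat; auto]. }
   assert (dl * dl / mk k <= 1/6).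
   { apply Rmult_le_reg_r with (r := mk k); auto. replace (dl * dl / mk k * mk k) with (dl * dl) by (field; lra).
     assert (dl * dl <= 1/4) by nra. unfold mk in *. lra. }
   assert (0 <= 4 * B * (INR k + 1) * s) by (repeat apply Rmult_le_pos; lra).
   assert (2 * INR k + 1/2 <= -2 * B + 4 * B * (INR k + 1) * s + 2 * s - dl * dl / mk k + (2 * INR k + 3)) by lra.
   assert (r ^ k * r ^ k * (2 * INR k + 1/2) <= r ^ k * r ^ k * (-2 * B + 4 * B * (INR k + 1) * s + 2 * s - dl * dl / mk k + (2 * INR k + 3))) by (apply Rmult_le_compat_l; auto).
   nra.
 - assert (Hx' : xk r K (S k) = r * r ^ k) by (unfold xk; destruct (Nat.ltb_spec (S k) K); [reflexivity|lia]). rewrite Hx'.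
   pose proof (core_ineq (INR k) Hk0) as Hc.
   replace (2 * INR k + 3/2) with (mk k) in Hc by reflexivity.
   assert (E : (2 * INR k + 1 / 2) * (r ^ k * r ^ k) -
      (A * (2 * INR k + 1) * r ^ k + B * (2 * INR k + 2) * (r * r ^ k)) * (A * (2 * INR k + 1) * r ^ k + B * (2 * INR k + 2) * (r * r ^ k)) / mk k
      = r ^ k * r ^ k * ((2 * INR k + 1 / 2) - (A * (2 * INR k + 1) + B * (2 * INR k + 2) * r) * (A * (2 * INR k + 1) + B * (2 * INR k + 2) * r) / mk k)) by (field; lra).
   rewrite E. rewrite Rplus_0_r. apply Rmult_le_compat_l; auto.
Qed.
End Bound.

Lemma geo_sum q K : sumR (fun k => q ^ k) K * (1 - q) = 1 - q ^ K.
Proof. induction K; simpl. ring. rewrite Rmult_plus_distr_r, IHK. ring. Qed.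

Lemma ar_sum q K : sumR (fun k => (INR k + 1) * q ^ k) K * ((1 - q) * (1 - q)) = 1 - (INR K + 1) * q ^ K + INR K * q ^ (S K).
Proof. induction K. simpl. ring. change (sumR (fun k => (INR k + 1) * q ^ k) (S K)) with (sumR (fun k => (INR k + 1) * q ^ k) K + (INR K + 1) * q ^ K).
 rewrite Rmult_plus_distr_r, IHK. rewrite S_INR. simpl. ring. Qed.

Lemma ind_sum f K : (1 <= K)%nat -> sumR (fun k => if (S k =? K)%nat then f k else 0) K = f (pred K).
Proof. intros HK. destruct K as [|K']. lia.
 change (sumR (fun k => if (S k =? S K')%nat then f k else 0) K' + (if (S K' =? S K')%nat then f K' else 0) = f (pred (S K'))).
 rewrite (sumR_ext (fun k => if (S k =? S K')%nat then f k else 0) (fun _ => 0)).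
 rewrite sumR_zero. rewrite Nat.eqb_refl. simpl. ring.
 intros i Hi. destruct (Nat.eqb_spec (S i) (S K')); auto; exfalso; lia. Qed.

Lemma S_part (B s : R) K : 0 <= B <= 1 -> 0 < s < 1 ->
  sumR (fun k => ((1 - s) * (1 - s)) ^ k * (-2 * B + 4 * B * (INR k + 1) * s + 2 * s)) K <= 4.
Proof. intros HB Hs. set (q := (1 - s) * (1 - s)).
 assert (Hq : 0 <= q <= 1) by (unfold q; nra).
 assert (HQ : 0 <= q ^ K <= 1) by (split; [apply pow_le; lra| rewrite <- (pow1 K); apply pow_incr; lra]).
 set (d := 1 - q). assert (Hd : d = s * (2 - s)) by (unfold d, q; ring). assert (Hdp : 0 < d) by (rewrite Hd; nra).
 rewrite (sumR_ext _ (fun k => (-2 * B + 2 * s) * q ^ k + 4 * B * s * ((INR k + 1) * q ^ k))) by (intros; ring).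
 rewrite sumR_plus, !sumR_scal.
 pose proof (geo_sum q K) as G0. pose proof (ar_sum q K) as G1. fold d in G0, G1.
 set (g0 := sumR (fun k => q ^ k) K) in *. set (g1 := sumR (fun k => (INR k + 1) * q ^ k) K) in *.
 assert (HK : INR K * q ^ S K <= INR K * q ^ K).
 { apply Rmult_le_compat_l. apply pos_INR. simpl. rewrite <- (Rmult_1_l (q ^ K)) at 2. apply Rmult_le_compat_r; lra. }
 assert (Hg1 : g1 * (d * d) <= 1 - q ^ K) by nra.
 assert (Hg1' : 4 * B * s * g1 * (d * d) <= 4 * B * s * (1 - q ^ K)).
 { replace (4 * B * s * g1 * (d * d)) with (4 * B * s * (g1 * (d * d))) by ring. apply Rmult_le_compat_l; [|lra].
   apply Rmult_le_pos; lra. }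
 apply Rmult_le_reg_r with (r := d * d). nra.
 assert (E : ((-2 * B + 2 * s) * g0 + 4 * B * s * g1) * (d * d) = (-2 * B + 2 * s) * (1 - q ^ K) * d + 4 * B * s * g1 * (d * d)).
 { rewrite <- G0. ring. }
 rewrite E.
 assert (E2 : (-2 * B + 2 * s) * (1 - q ^ K) * d + 4 * B * s * (1 - q ^ K) = (1 - q ^ K) * (s * s * (2 * B + 4 - 2 * s))).
 { rewrite Hd. ring. }
 assert ((1 - q ^ K) * (s * s * (2 * B + 4 - 2 * s)) <= 4 * (d * d)).
 { rewrite Hd. assert (0 <= s * s * (2 * B + 4 - 2 * s)) by (apply Rmult_le_pos; nra).
   assert ((1 - q ^ K) * (s * s * (2 * B + 4 - 2 * s)) <= s * s * (2 * B + 4 - 2 * s)) by nra.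
   assert (s * s * (2 * B + 4 - 2 * s) <= 4 * (s * (2 - s) * (s * (2 - s)))).
   { assert (0 <= s * s * (2 * (1 - s) * (5 - 2 * s) + 2 * (1 - B))) by (apply Rmult_le_pos; nra). nra. }
   lra. }
 lra.
Qed.

Lemma total_bound c1 c2 r K : Rabs c1 + Rabs c2 = 1 -> 0 < r < 1 -> (1 <= K)%nat ->
  Fz c1 c2 (1/2) (2 * K) (tv c1 c2 r K) <=
  4 + (r * r) ^ (pred K) * (2 * INR (pred K) + 3)
  - ((Rabs c1 - Rabs c2) / 2) * ((Rabs c1 - Rabs c2) / 2) * sumR (fun k => (r * r) ^ k / mk k) K.
Proof. intros hs hr HK. rewrite Fz_tv by auto.
 eapply Rle_trans. apply sumR_le. intros k Hk. apply (Tk_bound c1 c2 hs r hr K k Hk).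
 rewrite !sumR_plus. rewrite ind_sum by auto.
 rewrite (sumR_ext _ (fun k => (r * r) ^ k * (-2 * Rabs c2 + 4 * Rabs c2 * (INR k + 1) * (1 - r) + 2 * (1 - r))
     - ((Rabs c1 - Rabs c2) / 2) * ((Rabs c1 - Rabs c2) / 2) * ((r * r) ^ k / mk k))).
 2:{ intros; unfold Rdiv; ring. }
 rewrite sumR_minus, sumR_scal.
 assert (HB : 0 <= Rabs c2 <= 1) by (pose proof (Rabs_pos c1); pose proof (Rabs_pos c2); lra).
 pose proof (S_part (Rabs c2) (1 - r) K HB ltac:(lra)).
 replace ((1 - (1 - r)) * (1 - (1 - r))) with (r * r) in H by ring. lra.
Qed.

Lemma exp_h M : INR M + 1 <= exp (sumR (fun k => / (INR k + 1)) M).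
Proof. induction M. simpl. rewrite exp_0. lra.
 change (sumR (fun k => / (INR k + 1)) (S M)) with (sumR (fun k => / (INR k + 1)) M + / (INR M + 1)).
 rewrite exp_plus. pose proof (exp_ineq1_le (/ (INR M + 1))). pose proof (pos_INR M).
 assert (0 < / (INR M + 1)) by (apply Rinv_0_lt_compat; lra).
 rewrite S_INR. apply Rle_trans with ((INR M + 1) * (1 + / (INR M + 1))).
 right. field. lra. apply Rmult_le_compat; lra. Qed.

Lemma harmonic_unbounded X : exists M, (1 <= M)%nat /\ X <= sumR (fun k => / (INR k + 1)) M.
Proof. destruct (INR_unbounded (exp X)) as [M0 HM0]. exists (S M0). split. lia.
 pose proof (exp_h (S M0)). rewrite S_INR in H.
 destruct (Rle_dec X (sumR (fun k => / (INR k + 1)) (S M0))) as [h|h]; auto.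
 exfalso. apply Rnot_le_lt in h. apply exp_increasing in h. lra. Qed.

Lemma bernoulli_low s n : 0 <= s <= 1 -> 1 - INR n * s <= (1 - s) ^ n.
Proof. intros Hs. induction n. simpl. lra. rewrite S_INR. simpl.
 assert (0 <= INR n * s) by (apply Rmult_le_pos; [apply pos_INR|lra]).
 assert (0 <= (1 - s) ^ n) by (apply pow_le; lra).
 assert ((1 - s) * (1 - INR n * s) <= (1 - s) * (1 - s) ^ n) by (apply Rmult_le_compat_l; lra).
 nra. Qed.

Lemma bernoulli_up s n : 0 <= s -> 1 + INR n * s <= (1 + s) ^ n.
Proof. intros Hs. induction n. simpl. lra. rewrite S_INR. simpl.
 assert (0 <= INR n * s) by (apply Rmult_le_pos; [apply pos_INR|lra]).
 assert ((1 + s) * (1 + INR n * s) <= (1 + s) * (1 + s) ^ n) by (apply Rmult_le_compat_l; lra).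
 nra. Qed.

Lemma pow_small s n : 0 <= s <= 1 -> (1 - s) ^ n * (1 + INR n * s) <= 1.
Proof. intros Hs. pose proof (bernoulli_up s n (proj1 Hs)).
 assert (E : (1 - s) ^ n * (1 + s) ^ n = (1 - s * s) ^ n) by (rewrite <- Rpow_mult_distr; f_equal; ring).
 assert (Hss : 0 <= s * s <= 1) by (destruct Hs; split; [apply Rle_0_sqr| apply Rle_trans with (1 * s); [apply Rmult_le_compat_r|]; lra]).
 assert ((1 - s * s) ^ n <= 1) by (apply Rle_trans with (1 ^ n); [apply pow_incr; lra| rewrite pow1; lra]).
 assert (0 <= (1 - s) ^ n) by (apply pow_le; lra).
 assert ((1 - s) ^ n * (1 + INR n * s) <= (1 - s) ^ n * (1 + s) ^ n) by (apply Rmult_le_compat_l; auto). lra. Qed.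

Lemma pow_anti q a b : 0 <= q <= 1 -> (a <= b)%nat -> q ^ b <= q ^ a.
Proof. intros Hq Hab. replace b with (a + (b - a))%nat by lia. rewrite pow_add.
 assert (0 <= q ^ a) by (apply pow_le; lra). assert (q ^ (b - a) <= 1) by (rewrite <- (pow1 (b - a)); apply pow_incr; lra).
 assert (0 <= q ^ (b - a)) by (apply pow_le; lra). nra. Qed.

Lemma two_pow_sq j : (4 <= j)%nat -> (j * j <= 2 ^ j)%nat.
Proof. intros Hj. induction Hj. simpl. lia. rewrite Nat.pow_succ_r'. assert (2 * m + 1 <= m * m)%nat by nia. nia. Qed.

Lemma exists_neg c1 c2 : Rabs c1 + Rabs c2 = 1 -> Rabs c1 <> Rabs c2 ->
  exists n v, supp n v /\ Fz c1 c2 (1/2) n v < 0.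
Proof. intros hs hneq.
 set (dl := (Rabs c1 - Rabs c2) / 2). assert (Hd2 : 0 < dl * dl).
 { assert (dl <> 0) by (unfold dl; lra). pose proof (Rle_0_sqr dl). destruct (Rle_lt_or_eq_dec 0 (dl * dl) H0); auto.
   exfalso. symmetry in e. apply Rmult_integral in e. destruct e; auto. }
 destruct (harmonic_unbounded (24 / (dl * dl))) as [M [HM1 HM]].
 assert (HMr : 1 <= INR M) by (apply (le_INR 1); lia).
 set (s := / (4 * INR M)). assert (Hs : 0 < s <= 1/4).
 { unfold s. split. apply Rinv_0_lt_compat; lra. apply Rmult_le_reg_r with (r := 4 * INR M). lra.
   rewrite Rinv_l by lra. lra. }
 assert (H4Ms : INR (4 * M) * s = 1) by (unfold s; rewrite mult_INR; simpl; field; lra).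
 assert (H2Ms : INR (2 * M) * s = 1/2) by (unfold s; rewrite mult_INR; simpl; field; lra).
 set (r := 1 - s). assert (hr : 0 < r < 1) by (unfold r; lra).
 set (j := (8 * M + 8)%nat). set (K := (2 * M * j)%nat).
 assert (HK : (1 <= K)%nat) by (unfold K, j; nia).
 exists (2 * K)%nat, (tv c1 c2 r K). split. apply tv_supp.
 eapply Rle_lt_trans. apply (total_bound c1 c2 r K hs hr HK). fold dl.
 set (q := r * r). assert (Hq : 1/2 <= q <= 1) by (unfold q, r; nra).
 assert (Hqpow : forall n, q ^ n = (1 - s) ^ (2 * n)) by (intros; rewrite pow_mult; unfold q, r; f_equal; simpl; ring).
 assert (C1 : q ^ (pred K) * (2 * INR (pred K) + 3) <= 1).
 { assert (Hh : (1 - s) ^ (4 * M) <= 1/2).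
   { pose proof (pow_small s (4 * M) ltac:(lra)). rewrite H4Ms in H. lra. }
   assert (HQ : q ^ K <= (1/2) ^ j).
   { rewrite Hqpow. replace (2 * K)%nat with (4 * M * j)%nat by (unfold K; lia). rewrite pow_mult.
     apply pow_incr. split; [apply pow_le; lra| auto]. }
   assert (HqK : q ^ (pred K) * q = q ^ K).
   { replace K with (S (pred K)) at 2 by lia. simpl. ring. }
   assert (Hpred : q ^ (pred K) <= 2 * q ^ K).
   { rewrite <- HqK. assert (0 <= q ^ pred K) by (apply pow_le; lra). nra. }
   assert (HIN : 2 * INR (pred K) + 3 = INR (4 * K + 2) / 2).
   { assert (EK : INR K = INR (pred K) + 1) by (rewrite <- S_INR; f_equal; lia). rewrite plus_INR, mult_INR, EK. simpl. field. }
   assert (Hnat : (4 * K + 2 <= 2 ^ j)%nat).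
   { pose proof (two_pow_sq j ltac:(unfold j; lia)). unfold K in *. unfold j in *. nia. }
   apply le_INR in Hnat. rewrite pow_INR in Hnat. simpl INR in Hnat at 2.
   assert (Hinv : (1/2) ^ j * (1 + 1) ^ j = 1) by (rewrite <- Rpow_mult_distr; replace (1/2 * (1 + 1)) with 1 by field; apply pow1).
   assert (0 <= (1/2) ^ j) by (apply pow_le; lra).
   assert (0 <= q ^ (pred K)) by (apply pow_le; lra).
   rewrite HIN.
   assert (q ^ pred K * (INR (4 * K + 2) / 2) <= q ^ pred K * ((1 + 1) ^ j / 2)).
   { apply Rmult_le_compat_l; auto. lra. }
   assert (q ^ pred K * ((1 + 1) ^ j / 2) <= 2 * (1/2) ^ j * ((1 + 1) ^ j / 2)).
   { apply Rmult_le_compat_r. assert (0 < (1 + 1) ^ j) by (apply pow_lt; lra). lra. lra. }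
   assert (2 * (1/2) ^ j * ((1 + 1) ^ j / 2) = 1) by (replace (2 * (1/2) ^ j * ((1 + 1) ^ j / 2)) with ((1/2) ^ j * (1 + 1) ^ j) by field; exact Hinv). lra. }
 assert (C2 : 6 <= dl * dl * sumR (fun k => q ^ k / mk k) K).
 { assert (HKM : (M <= K)%nat) by (unfold K, j; nia).
   assert (Hnn : forall k, 0 <= q ^ k / mk k) by (intros; apply Rmult_le_pos; [apply pow_le; lra| left; apply Rinv_0_lt_compat, mk_pos]).
   pose proof (sumR_mono _ M K Hnn HKM).
   assert (HqM : 1/2 <= q ^ M).
   { rewrite Hqpow. pose proof (bernoulli_low s (2 * M) ltac:(lra)). lra. }
   assert (sumR (fun k => / 4 * / (INR k + 1)) M <= sumR (fun k => q ^ k / mk k) M).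
   { apply sumR_le. intros k Hk. pose proof (pow_anti q k M ltac:(lra) ltac:(lia)). pose proof (mk_pos k). pose proof (pos_INR k).
     unfold Rdiv. assert (/ (2 * (INR k + 1)) <= / mk k) by (apply Rinv_le_contravar; auto; unfold mk; lra).
     replace (/ 4 * / (INR k + 1)) with (/ 2 * / (2 * (INR k + 1))) by (field; lra).
     apply Rmult_le_compat; try lra. left; apply Rinv_0_lt_compat; lra. }
   rewrite sumR_scal in H0.
   assert (HM' : 24 <= dl * dl * sumR (fun k => / (INR k + 1)) M).
   { apply Rmult_le_compat_l with (r := dl * dl) in HM; [|lra]. replace (dl * dl * (24 / (dl * dl))) with 24 in HM by (field; intro Hc; rewrite Hc in Hd2; lra). auto. }
   assert (dl * dl * (/ 4 * sumR (fun k => / (INR k + 1)) M) <= dl * dl * sumR (fun k => q ^ k / mk k) K) by (apply Rmult_le_compat_l; lra).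
   lra. }
 lra.
Qed.

Theorem theorem3 (c1 c2 : R)
  (hsum : Rabs c1 + Rabs c2 = 1)
  (hnz : c1 * c2 <> 0)
  (hneq : Rabs c1 <> Rabs c2) :
  exists z : R, z < 1 / 2 /\ in_spectrum c1 c2 z.
Proof.
  apply (spectral_main c1 c2 hsum). apply exists_neg; auto.
Qed.
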